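(* Converting IFAs to nondeterministic finite automata requires a super-polynomial state blowup: there is no polynomial $p$ such that every IFA with $n$ states admits a nondeterministic finite automaton with at most $p(n)$ states accepting the same language.
   Context: A $\mathbb{Q}$-weighted automaton $\mathcal{A} = (Q, \Sigma, M, \alpha, \eta)$ consists of a finite state set $Q$, finite alphabet $\Sigma$, $M : \Sigma \to \mathbb{Q}^{Q\times Q}$, initial row vector $\alpha \in \mathbb{Q}^Q$, final column vector $\eta \in \mathbb{Q}^Q$; with $M(a_1\cdots a_k) = M(a_1)\cdots M(a_k)$, it assigns $L_\mathcal{A}(w) = \alpha M(w)\eta$ to each $w \in \Sigma^*$. It is an IFA if $L_\mathcal{A}(w) \in \{0,1\}$ for all $w$, and then its language is $L(\mathcal{A}) = \{w \mid L_\mathcal{A}(w) = 1\}$. The number of states of $\mathcal{A}$ is $|Q|$. *)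

(* Defs.v *)
From HB Require Import structures.
From mathcomp Require Import all_boot all_order all_algebra.
Set Implicit Arguments. Unset Strict Implicit. Unset Printing Implicit Defensive.
Import Order.TTheory GRing.Theory Num.Theory.
Local Open Scope ring_scope.

Record wautomaton (Sigma : finType) (n : nat) := WAut {
  wa_M : Sigma -> 'M[rat]_n;
  wa_alpha : 'rV[rat]_n;
  wa_eta : 'cV[rat]_n }.

Definition wa_word (Sigma : finType) (n : nat) (A : wautomaton Sigma n)
  (w : seq Sigma) : 'M[rat]_n :=
  foldr (fun a B => wa_M A a *m B) 1%:M w.

Definition wa_weight (Sigma : finType) (n : nat) (A : wautomaton Sigma n)
  (w : seq Sigma) : rat :=
  (wa_alpha A *m wa_word A w *m wa_eta A) 0 0.

Definition is_IFA (Sigma : finType) (n : nat) (A : wautomaton Sigma n) : Prop :=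
  forall w : seq Sigma, wa_weight A w = 0 \/ wa_weight A w = 1.

Definition wa_lang (Sigma : finType) (n : nat) (A : wautomaton Sigma n)
  (w : seq Sigma) : Prop := wa_weight A w = 1.

Record nfa (Sigma : finType) (m : nat) := NFA {
  nfa_init : {set 'I_m};
  nfa_final : {set 'I_m};
  nfa_delta : Sigma -> 'I_m -> 'I_m -> bool }.

Fixpoint nfa_acc_from (Sigma : finType) (m : nat) (B : nfa Sigma m)
  (q : 'I_m) (w : seq Sigma) : bool :=
  match w with
  | [::] => q \in nfa_final B
  | a :: w' => [exists q' : 'I_m, nfa_delta B a q q' && nfa_acc_from B q' w']
  end.

Definition nfa_accepts (Sigma : finType) (m : nat) (B : nfa Sigma m)
  (w : seq Sigma) : bool :=
  [exists q in nfa_init B, nfa_acc_from B q w].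

(* Main.v *)
Require Import Defs.
From HB Require Import structures.
From mathcomp Require Import all_boot all_order all_algebra.
From mathcomp Require Import mxtens zify.
Import Order.TTheory GRing.Theory Num.Theory.

Lemma two_pow_le_bin n : 2 ^ n <= 'C(n.*2, n).
Proof.
have -> : 2 ^ n = \sum_(j < n.+1) 'C(n, j).
  by rewrite -{1}(addn1 1) expnDn; apply: eq_bigr => i _; rewrite !exp1n !muln1.
rewrite -addnn -binomial.Vandermonde; apply: leq_sum => j _.
rewrite bin_sub; last by rewrite -ltnS.
by case: ('C(n, j)) => // c; rewrite leq_pmulr.
Qed.

Lemma term_le1 x d : 0 < d -> x.*2 %/ d - (x %/ d).*2 <= 1.
Proof.
move=> d0; rewrite leq_subLR.
have Hx := divn_eq x d; have Hm : x %% d < d by rewrite ltn_mod.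
have Hx2 := divn_eq x.*2 d; have Hm2 : x.*2 %% d < d by rewrite ltn_mod.
set a := x %/ d in Hx *; set b := x.*2 %/ d in Hx2 *.
set r := x %% d in Hx Hm; set r2 := x.*2 %% d in Hx2 Hm2.
nia.
Qed.

Lemma term_0 x d : 0 < d -> x.*2 < d -> x.*2 %/ d - (x %/ d).*2 = 0.
Proof. by move=> d0 h; rewrite divn_small. Qed.

Lemma cnt_le M t : \sum_(1 <= k < M.+1) (k <= t) <= minn M t.
Proof.
elim: M => [|M IH]; first by rewrite big_geq.
rewrite big_nat_recr //=; case: (leqP M.+1 t) => h.
  rewrite (minn_idPl (ltnW h)) in IH; by rewrite addn1.
rewrite addn0; apply: leq_trans IH _; exact: geq_minr.
Qed.

Lemma logn_bin_le p n : prime p -> 0 < n -> p ^ logn p 'C(n.*2, n) <= n.*2.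
Proof.
move=> pp; have p1 := prime_gt1 pp.
case: n => [//|n] _.
set N := n.+1.
have N0 : 0 < N.*2 by [].
set t := trunc_log p N.*2.
have Ht : p ^ t <= N.*2 := trunc_logP p1 N0.
suff : logn p 'C(N.*2, N) <= t.
  by move=> h; apply: leq_trans Ht; rewrite leq_exp2l.
have hf := bin_fact (leq_addr N N).
rewrite addKn addnn in hf.
have Hl : logn p 'C(N.*2, N) = logn p (N.*2)`! - (logn p N`!).*2.
  rewrite -hf lognM ?bin_gt0 ?muln_gt0 ?fact_gt0 //; last by rewrite -addnn leq_addr.
  by rewrite lognM ?fact_gt0 // addnn addnK.
rewrite Hl !logn_fact //.
have ext : \sum_(1 <= k < N.+1) N %/ p ^ k = \sum_(1 <= k < N.*2.+1) N %/ p ^ k.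
  rewrite [RHS](big_cat_nat (n:=N.+1)) //=; last by rewrite ltnS -addnn leq_addr.
  rewrite [X in _ + X]big1_seq ?addn0 // => k /andP [_].
  rewrite mem_index_iota => /andP [hk _]; rewrite divn_small //.
  exact: leq_trans hk (ltnW (ltn_expl k p1)).
have dbl : (\sum_(1 <= k < N.*2.+1) N %/ p ^ k).*2 = \sum_(1 <= k < N.*2.+1) (N %/ p ^ k).*2.
  by rewrite -[LHS]addnn -big_split /=; apply: eq_bigr => k _; rewrite addnn.
rewrite ext dbl -sumnB; last first.
  move=> k _; have pk0 : 0 < p ^ k by rewrite expn_gt0 ltnW.
  have Hx := divn_eq N (p ^ k).
  have Hx2 := divn_eq N.*2 (p ^ k).
  have Hm : N %% p ^ k < p ^ k by rewrite ltn_mod.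
  have Hm2 : N.*2 %% p ^ k < p ^ k by rewrite ltn_mod.
  move: Hx Hx2 Hm Hm2; set a := N %/ p ^ k; set b := N.*2 %/ p ^ k.
  set r := N %% p ^ k; set r2 := N.*2 %% p ^ k; set P := p ^ k. nia.
have Hs : forall k, (k \in index_iota 1 N.*2.+1) ->
    N.*2 %/ p ^ k - (N %/ p ^ k).*2 <= (k <= t).
  move=> k _; have pk0 : 0 < p ^ k by rewrite expn_gt0 ltnW.
  case: (leqP k t) => hk; first exact: term_le1.
  rewrite term_0 //; apply: leq_trans (trunc_log_ltn _ p1) _.
  by rewrite leq_exp2l.
rewrite big_seq.
apply: (@leq_trans (\sum_(i <- index_iota 1 N.*2.+1 | i \in index_iota 1 N.*2.+1) (i <= t))).
  exact: leq_sum.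
rewrite -big_seq.
apply: leq_trans (cnt_le _ _) _; exact: geq_minr.
Qed.

Lemma prime_dvd_fact_le p m : prime p -> p %| m`! -> p <= m.
Proof.
move=> pp hd; rewrite leqNgt; apply/negP => hm.
have : logn p m`! = 0.
  rewrite logn_fact // big1_seq // => k /andP [_]; rewrite mem_index_iota => /andP [hk _].
  rewrite divn_small //; apply: leq_trans hm _.
  by rewrite -{1}(expn1 p) leq_exp2l ?prime_gt1.
move/eqP; rewrite -leqn0 leqNgt logn_gt0 mem_primes pp fact_gt0 hd.
by [].
Qed.

Lemma prod_le_pow (s : seq nat) (F : nat -> nat) c :
  (forall x, x \in s -> F x <= c) -> \prod_(x <- s) F x <= c ^ size s.
Proof.
elim: s => [|x s IH] h; first by rewrite big_nil.
rewrite big_cons /= expnS leq_mul //; first by apply: h; rewrite mem_head.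
by apply: IH => y hy; apply: h; rewrite inE hy orbT.
Qed.

Lemma bin_primes n : 0 < n ->
  [/\ uniq (primes 'C(n.*2, n)), all prime (primes 'C(n.*2, n)),
      all (fun p => p <= n.*2) (primes 'C(n.*2, n)) &
      2 ^ n <= (n.*2) ^ size (primes 'C(n.*2, n))].
Proof.
move=> n0; set C := 'C(n.*2, n).
have C0 : 0 < C by rewrite bin_gt0 -addnn leq_addr.
have hf := bin_fact (leq_addr n n); rewrite addKn addnn in hf.
split.
- exact: primes_uniq.
- by apply/allP => p; rewrite mem_primes => /and3P [].
- apply/allP => p; rewrite mem_primes => /and3P [pp _ hd].
  apply: prime_dvd_fact_le pp _; rewrite -hf; exact: dvdn_mulr.
- apply: leq_trans (two_pow_le_bin n) _.
  rewrite [X in X <= _](prod_prime_decomp C0) prime_decompE big_map /=.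
  apply: prod_le_pow => p; rewrite mem_primes => /and3P [pp _ _].
  exact: logn_bin_le.
Qed.

Lemma pow16 K : K.+1 * 3 ^ K <= 16 ^ K.
Proof.
elim: K => // K IH; rewrite !expnS; nia.
Qed.

Lemma many_primes K : exists ps : seq nat,
  [/\ size ps = 3 ^ K, uniq ps, all prime ps & all (fun p => p <= 2 ^ (4 * K + 4)) ps].
Proof.
set n := 2 ^ (4 * K + 3).
have n0 : 0 < n by rewrite expn_gt0.
have n2 : n.*2 = 2 ^ (4 * K + 4) by rewrite -mul2n -expnS -addnS.
case: (@bin_primes n n0) => U A B L.
have hs : 3 ^ K <= size (primes 'C(n.*2, n)).
  rewrite leqNgt; apply/negP => h.
  move: L; rewrite n2 -expnM leq_exp2l // -n2 => L.
  set S := size _ in L h.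
  have h1 := pow16 K.
  have hn : n = 8 * 16 ^ K by rewrite /n expnD mulnC expnM.
  have h2 : (4 * K + 4) * S.+1 <= (4 * K + 4) * 3 ^ K by rewrite leq_mul2l h orbT.
  nia.
exists (take (3 ^ K) (primes 'C(n.*2, n))); split.
- by rewrite size_takel.
- exact: take_uniq.
- by apply/allP => p /mem_take /(allP A).
- by apply/allP => p /mem_take /(allP B); rewrite n2.
Qed.

Lemma not_dvd_prod q (s : seq nat) : prime q -> all prime s -> q \notin s ->
  ~~ (q %| \prod_(p <- s) p).
Proof.
move=> pq A hq; rewrite Euclid_dvd_prod // big_has; apply/hasPn => p hp.
rewrite dvdn_prime2 //; last exact: (allP A p hp).
by apply: contraNneq hq => ->.
Qed.

Lemma prod_dvd (s : seq nat) c : uniq s -> all prime s ->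
  (forall q, q \in s -> q %| c) -> \prod_(p <- s) p %| c.
Proof.
elim: s => [|q s IH] /=; first by rewrite big_nil dvd1n.
case/andP => hq us /andP [pq ps] hd; rewrite big_cons Gauss_dvd.
  by rewrite hd ?mem_head // IH // => r hr; apply: hd; rewrite inE hr orbT.
by rewrite prime_coprime // not_dvd_prod.
Qed.

Lemma prod_ge (s : seq nat) : all prime s -> 2 ^ size s <= \prod_(p <- s) p.
Proof.
elim: s => [|q s IH] /=; first by rewrite big_nil.
case/andP => pq ps; rewrite big_cons expnS leq_mul ?prime_gt1 //; exact: IH.
Qed.

Lemma dvd_prod_mem q (s : seq nat) : q \in s -> q %| \prod_(p <- s) p.
Proof. by move=> hq; rewrite (big_rem q) //= dvdn_mulr. Qed.

Lemma expn_le_base a b e : a <= b -> a ^ e <= b ^ e.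
Proof. by move=> h; elim: e => // e IH; rewrite !expnS leq_mul. Qed.

Section Pump.
Variables (m : nat) (B : nfa unit m).


Fixpoint Reach (k : nat) (q q' : 'I_m) : Prop :=
  match k with 0 => q = q' | k'.+1 => exists s, nfa_delta B tt q s /\ Reach k' s q' end.

Lemma acc_Reach k q : nfa_acc_from B q (nseq k tt) <->
  exists q', Reach k q q' /\ q' \in nfa_final B.
Proof.
elim: k q => [|k IH] q /=; first by split; [move=> h; exists q | case=> q' [<-]].
split.
  case/existsP => s /andP [hd /IH [q' [hr hf]]]; exists q'; split=> //; by exists s.
case=> q' [[s [hd hr]] hf]; apply/existsP; exists s; rewrite hd /=; apply/IH.
by exists q'.
Qed.

Lemma Reach_add a b q q'' :
  Reach (a + b) q q'' <-> exists s, Reach a q s /\ Reach b s q''.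
Proof.
elim: a q => [|a IH] q /=; first by split; [move=> h; exists q | case=> s [<-]].
split.
  case=> s [hd /IH [t [h1 h2]]]; exists t; split=> //; by exists s.
case=> t [[s [hd h1]] h2]; exists s; split=> //; apply/IH; by exists t.
Qed.

Lemma Reach_loop c j s : Reach c s s -> Reach (c * j) s s.
Proof.
move=> h; elim: j => [|j IH]; first by rewrite muln0.
rewrite mulnS; apply/Reach_add; by exists s.
Qed.

Lemma Reach_fun k q q' : Reach k q q' ->
  exists f : nat -> 'I_m, [/\ f 0 = q, f k = q' &
     forall i j, i <= j <= k -> Reach (j - i) (f i) (f j)].
Proof.
elim: k q => [|k IH] q /=.
  move=> ->; exists (fun _ => q'); split=> // i j /andP [hij hj].
  by have -> : j - i = 0 by lia.
case=> s [hd /IH [g [g0 gk hg]]].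
exists (fun i => if i is i'.+1 then g i' else q); split=> //.
move=> [|i] [|j] /andP [hij hj] //=.
  exists s; split=> //; have := hg 0 j; rewrite subn0 g0; apply; lia.
rewrite subSS; apply: hg; lia.
Qed.

Lemma pump k : nfa_accepts B (nseq k tt) -> m <= k ->
  exists c, [/\ 0 < c, c <= m & forall t, nfa_accepts B (nseq (k + c * t) tt)].
Proof.
case/existsP => q /andP [qi /acc_Reach [q' [hr hf]]] hmk.
case: (@Reach_fun _ _ _ hr) => f [f0 fk hf'].
pose g (i : 'I_m.+1) : 'I_m := f i.
have : ~~ injectiveb g.
  apply/negP => /injectiveP hi; have := leq_card _ hi; rewrite !card_ord; lia.
case/injectivePn => x [y hxy hg].
wlog lt : x y hxy hg / x < y.
  move=> W; case: (ltngtP x y) => h; first exact: W h.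
    apply: (W y x) => //; by rewrite eq_sym.
  by move: hxy; rewrite (val_inj h) eqxx.
have hy : y <= m by rewrite -ltnS.
have hg' : f x = f y := hg.
move: hg' lt hy; move: (x : nat) (y : nat) => a b hg' lt hy.
clear hg hxy g x y.
exists (b - a); split; [lia | lia |] => t.
apply/existsP; exists q; rewrite qi /=; apply/acc_Reach; exists q'; split=> //.
have -> : k + (b - a) * t = a + ((b - a) * t.+1 + (k - b)).
  rewrite mulnS; move: ((b - a) * t) => z; lia.
apply/Reach_add; exists (f a); split.
  have := hf' 0 a; rewrite subn0 f0; apply; lia.
apply/Reach_add; exists (f a); split.
  apply: Reach_loop; move: (hf' a b); rewrite -hg'; apply; lia.
rewrite hg' -fk; apply: hf'; lia.
Qed.

End Pump.

Local Open Scope ring_scope.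

Record ua := UA { ud : nat; uM : 'M[rat]_ud; ua0 : 'rV[rat]_ud; ue : 'cV[rat]_ud }.

Definition uv (A : ua) (k : nat) : 'rV[rat]_(ud A) := iter k (fun v => v *m uM A) (ua0 A).
Definition uw (A : ua) (k : nat) : rat := (uv A k *m ue A) 0 0.

Definition uconst (c : rat) : ua := @UA 1 1%:M c%:M 1%:M.
Lemma uw_const c k : uw (uconst c) k = c.
Proof.
rewrite /uw; have -> : uv (uconst c) k = c%:M by rewrite /uv /=; elim: k => // k IH; rewrite [iter _.+1 _ _]/= IH; rewrite mulmx1.
by rewrite mulmx1 mxE eqxx mulr1n.
Qed.

Definition uscale (c : rat) (A : ua) : ua := @UA (ud A) (uM A) (c *: ua0 A) (ue A).
Lemma uw_scale c A k : uw (uscale c A) k = c * uw A k.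
Proof.
rewrite /uw; have -> : uv (uscale c A) k = c *: uv A k by rewrite /uv /=; elim: k => // k IH; rewrite [iter _.+1 _ _]/= IH; rewrite scalemxAl.
by rewrite /uw -scalemxAl mxE.
Qed.

Definition uadd (A B : ua) : ua :=
  @UA (ud A + ud B) (block_mx (uM A) 0 0 (uM B)) (row_mx (ua0 A) (ua0 B)) (col_mx (ue A) (ue B)).
Lemma uw_add A B k : uw (uadd A B) k = uw A k + uw B k.
Proof.
rewrite /uw; have -> : uv (uadd A B) k = row_mx (uv A k) (uv B k).
  rewrite /uv /=; elim: k => // k IH; rewrite [iter _.+1 _ _]/= IH; by rewrite mul_row_block !mulmx0 addr0 add0r.
by rewrite /uw mul_row_col mxE.
Qed.

Definition umul (A B : ua) : ua :=
  @UA (ud A * ud B) (uM A *t uM B) (ua0 A *t ua0 B) (ue A *t ue B).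
Lemma uw_mul A B k : uw (umul A B) k = uw A k * uw B k.
Proof.
rewrite /uw; have -> : uv (umul A B) k = uv A k *t uv B k.
  rewrite /uv /=; elim: k => // k IH; rewrite [iter _.+1 _ _]/= IH [RHS]/=; exact: (@tensmx_mul _ 1 (ud A) 1 (ud B) (ud A) (ud B)).
rewrite /= (@tensmx_mul _ 1 (ud A) 1 (ud B) 1 1).
apply: (etrans _ (@tensmxE _ 1 1 1 1 _ _ 0 0 0 0)); congr (fun_of_matrix _ _ _); exact: val_inj.
Qed.

Definition ucyc (q : nat) (f : nat -> rat) : ua :=
  @UA q.+1 (\matrix_(i < q.+1, j < q.+1) ((j : nat) == (i.+1 %% q.+1)%N)%:R)
     (delta_mx 0 ord0) (\col_i f i).
Lemma uw_cyc q f k : uw (ucyc q f) k = f (k %% q.+1)%N.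
Proof.
have H : uv (ucyc q f) k = delta_mx 0 (Ordinal (ltn_pmod k (ltn0Sn q))).
  elim: k => [|k IH] /=; first by congr delta_mx; apply: val_inj; rewrite /= mod0n.
  rewrite IH -rowE; apply/matrixP => i j; rewrite !mxE /= [i]ord1 eqxx /=.
  by rewrite -val_eqE /= -[(k %% q.+1).+1]addn1 modnDml addn1.
by rewrite /uw H -rowE !mxE.
Qed.

Definition nae (a b c : bool) := ~~ ((a == b) && (b == c)).

Fixpoint fval (K : nat) (ps : seq nat) (u : nat) : bool :=
  if K is K'.+1 then
    nae (fval K' (take (3 ^ K') ps) u) (fval K' (take (3 ^ K') (drop (3 ^ K') ps)) u)
        (fval K' (drop (3 ^ K' + 3 ^ K') ps) u)
  else ~~ (head 1%N ps %| u)%N.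

Definition unae (A B C : ua) : ua :=
  uadd (uadd (uadd A B) C) (uscale (-1) (uadd (uadd (umul A B) (umul A C)) (umul B C))).

Fixpoint faut (K : nat) (ps : seq nat) : ua :=
  if K is K'.+1 then
    unae (faut K' (take (3 ^ K') ps)) (faut K' (take (3 ^ K') (drop (3 ^ K') ps)))
         (faut K' (drop (3 ^ K' + 3 ^ K') ps))
  else ucyc (head 1%N ps).-1 (fun i => (i != 0%N)%:R).

Lemma nae_R (a b c : bool) :
  a%:R + b%:R + c%:R + (-1) * (a%:R * b%:R + a%:R * c%:R + b%:R * c%:R)
  = (nae a b c)%:R :> rat.
Proof. by case: a; case: b; case: c; rewrite /nae /=; apply/eqP. Qed.

Lemma head_pos (ps : seq nat) : all (fun p => 0 < p)%N ps -> (0 < head 1 ps)%N.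
Proof. by case: ps => //= p ps /andP []. Qed.

Lemma all_take (T : eqType) (P : pred T) n (s : seq T) : all P s -> all P (take n s).
Proof. by move=> h; apply/allP => x /mem_take /(allP h). Qed.
Lemma all_drop (T : eqType) (P : pred T) n (s : seq T) : all P s -> all P (drop n s).
Proof. by move=> h; apply/allP => x /mem_drop /(allP h). Qed.

Lemma faut_w K ps u : all (fun p => 0 < p)%N ps -> uw (faut K ps) u = (fval K ps u)%:R.
Proof.
elim: K ps => [|K IH] ps hp /=.
  rewrite uw_cyc prednK ?head_pos //.
  rewrite /unae !(uw_add, uw_scale, uw_mul) !IH ?all_take ?all_drop //.
exact: nae_R.
Qed.

Lemma faut_dim K ps (Q : nat) : (0 < Q)%N -> all (fun p => p <= Q)%N ps ->
  all (fun p => 0 < p)%N ps -> (6 * ud (faut K ps) <= (6 * Q) ^ (2 ^ K))%N.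
Proof.
move=> Q0; elim: K ps => [|K IH] ps hQ hp /=.
  rewrite expn1 prednK ?head_pos // leq_mul2l /=.
  by case: ps hQ {hp} => //= p ps /andP [].
have X6 : (6 <= (6 * Q) ^ (2 ^ K))%N.
  apply: leq_trans (_ : 6 * Q <= _)%N; first by rewrite leq_pmulr.
  by rewrite -{1}(expn1 (6 * Q)) leq_exp2l ?expn_gt0 //; lia.
have h1 := IH (take (3 ^ K) ps) (all_take _ _ _ _ hQ) (all_take _ _ _ _ hp).
have h2 := IH (take (3 ^ K) (drop (3 ^ K) ps)) (all_take _ _ _ _ (all_drop _ _ _ _ hQ)) (all_take _ _ _ _ (all_drop _ _ _ _ hp)).
have h3 := IH (drop (3 ^ K + 3 ^ K) ps) (all_drop _ _ _ _ hQ) (all_drop _ _ _ _ hp).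
move: h1 h2 h3 X6; set X := ((6 * Q) ^ (2 ^ K))%N.
have -> : ((6 * Q) ^ (2 ^ K.+1) = X * X)%N by rewrite /X -expnD addnn -mul2n -expnS.
rewrite /=; set a := ud _; set b := ud _; set c := ud _.
nia.
Qed.

Lemma split3 (ps : seq nat) s :
  ps = take s ps ++ take s (drop s ps) ++ drop (s + s) ps.
Proof. by rewrite -drop_drop !cat_take_drop. Qed.

Lemma f_all K ps u : size ps = (3 ^ K)%N -> (forall p, p \in ps -> (p %| u)%N) ->
  fval K ps u = false.
Proof.
elim: K ps => [|K IH] ps hs hd /=.
  case: ps hs hd => //= p ps _ hd; by rewrite hd ?mem_head.
have hs' : (3 ^ K <= size ps)%N by rewrite hs expnS leq_pmull.
have sA : size (take (3 ^ K) ps) = (3 ^ K)%N by rewrite size_takel.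
have sB : size (take (3 ^ K) (drop (3 ^ K) ps)) = (3 ^ K)%N.
  rewrite size_take size_drop hs expnS; case: ltnP => //; lia.
have sC : size (drop (3 ^ K + 3 ^ K) ps) = (3 ^ K)%N.
  by rewrite size_drop hs expnS; lia.
have hA : forall p, p \in take (3 ^ K) ps -> (p %| u)%N by move=> p /mem_take /hd.
have hB : forall p, p \in take (3 ^ K) (drop (3 ^ K) ps) -> (p %| u)%N.
  by move=> p /mem_take /mem_drop /hd.
have hC : forall p, p \in drop (3 ^ K + 3 ^ K) ps -> (p %| u)%N by move=> p /mem_drop /hd.
by rewrite (IH _ sA hA) (IH _ sB hB) (IH _ sC hC).
Qed.

Lemma mem_count (q : nat) (X : seq nat) : (q \in X) = (0 < count_mem q X)%N.
Proof. by rewrite -has_pred1 has_count. Qed.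

Lemma f_one K ps u q : size ps = (3 ^ K)%N -> uniq ps -> q \in ps -> ~~ (q %| u)%N ->
  (forall p, p \in ps -> p != q -> (p %| u)%N) -> fval K ps u = true.
Proof.
elim: K ps => [|K IH] ps hs hu hq hqu hd /=.
  case: ps hs hu hq hd => //= p [|//] _ _; rewrite inE => /eqP <- _; exact: hqu.
have sA : size (take (3 ^ K) ps) = (3 ^ K)%N.
  by rewrite size_takel // hs expnS leq_pmull.
have sB : size (take (3 ^ K) (drop (3 ^ K) ps)) = (3 ^ K)%N.
  rewrite size_take size_drop hs expnS; case: ltnP => //; lia.
have sC : size (drop (3 ^ K + 3 ^ K) ps) = (3 ^ K)%N.
  by rewrite size_drop hs expnS; lia.
set A := take _ ps in sA *; set B := take _ _ in sB *; set C := drop _ _ in sC *.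
have E : ps = A ++ B ++ C by exact: split3.
have uA : uniq A by apply: take_uniq.
have uB : uniq B by apply: take_uniq; apply: drop_uniq.
have uC : uniq C by apply: drop_uniq.
have cnt : (count_mem q A + count_mem q B + count_mem q C = 1)%N.
  have := count_uniq_mem q hu; rewrite hq E !count_cat addnA; by [].
have inps : forall p, (p \in A) || (p \in B) || (p \in C) -> p \in ps.
  by move=> p; rewrite E !mem_cat orbA.
have divX : forall X : seq nat, (forall p, p \in X -> p \in ps) -> q \notin X ->
    forall p, p \in X -> (p %| u)%N.
  move=> X hX hqX p hp; apply: hd; first exact: hX.
  by apply: contraNneq hqX => <-.
have fX : forall X : seq nat, size X = (3 ^ K)%N ->
    (forall p, p \in X -> p \in ps) -> count_mem q X = 0%N -> fval K X u = false.
  move=> X sX hX c0; apply: f_all => //; apply: divX => //.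
  by rewrite mem_count c0.
have tX : forall X : seq nat, size X = (3 ^ K)%N -> uniq X ->
    (forall p, p \in X -> p \in ps) -> (0 < count_mem q X)%N -> fval K X u = true.
  move=> X sX uX hX c0; apply: IH => //; first by rewrite mem_count.
  move=> p hp; exact: hd (hX p hp).
have hA : forall p, p \in A -> p \in ps by move=> p h; apply: inps; rewrite h.
have hB : forall p, p \in B -> p \in ps by move=> p h; apply: inps; rewrite h orbT.
have hC : forall p, p \in C -> p \in ps by move=> p h; apply: inps; rewrite h !orbT.
case: (posnP (count_mem q A)) => a0.
  case: (posnP (count_mem q B)) => b0.
    have c0 : (0 < count_mem q C)%N by lia.
    by rewrite (fX A) // (fX B) // (tX C).
  have c0 : count_mem q C = 0%N by lia.
  by rewrite (fX A) // (tX B) // (fX C).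
have b0 : count_mem q B = 0%N by lia.
have c0 : count_mem q C = 0%N by lia.
by rewrite (tX A) // (fX B) // (fX C).
Qed.

Lemma poly_bound (p : {poly rat}) : exists C0 d : nat,
  forall x : nat, (1 <= x)%N -> p.[x%:R] <= (C0 * x ^ d)%:R.
Proof.
set S := \sum_(i < size p) `|p`_i|.
have S0 : 0 <= S by apply: sumr_ge0 => i _.
exists (Num.Def.archi_bound S), (size p) => x x1.
have x1r : 1 <= x%:R :> rat by rewrite ler1n.
rewrite natrM natrX horner_coef.
apply: le_trans (ler_norm _) _; apply: le_trans (ler_norm_sum _ _ _) _.
apply: (@le_trans _ _ (S * x%:R ^+ size p)).
  rewrite /S mulr_suml; apply: ler_sum => i _.
  rewrite normrM normrX [`|x%:R|]ger0_norm ?ler0n //; apply: ler_wpM2l => //.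
  by apply: ler_weXn2l => //; apply: ltnW.
apply: ler_wpM2r; first by apply: exprn_ge0; apply: ler0n.
exact: ltW (archi_boundP S0).
Qed.

Lemma arith a b : exists K, (a + (4 * K + 7) * 2 ^ K * b <= 3 ^ K)%N.
Proof.
set t := (a + 16 * b + 7)%N.
set s := (t + t)%N.
exists (s + s)%N.
have h1 : (t < 2 ^ t)%N by apply: ltn_expl.
have h2 : (2 ^ s = 2 ^ t * 2 ^ t)%N by rewrite expnD.
have h3 : (a + (8 * s + 7) * b <= 2 ^ s)%N by rewrite h2; nia.
have h4 : (3 ^ (s + s) = 9 ^ s)%N by rewrite expnD -expnMn.
have h5 : (2 ^ (s + s) = 4 ^ s)%N by rewrite expnD -expnMn.
have h6 : (2 ^ s * 4 ^ s <= 9 ^ s)%N by rewrite -expnMn leq_exp2r // /s /t; lia.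
have h7 : (1 <= 4 ^ s)%N by rewrite expn_gt0.
rewrite h4 h5; apply: leq_trans h6.
have : (4 * (s + s) + 7 <= 8 * s + 7)%N by lia.
nia.
Qed.


Lemma wa_word_iter n (M : 'M[rat]_n) (al : 'rV[rat]_n) (et : 'cV[rat]_n) (w : seq unit) :
  wa_word (WAut (fun _ => M) al et) w = iter (size w) (mulmx M) 1%:M.
Proof. by elim: w => //= a w ->. Qed.

Lemma iter_row n (M : 'M[rat]_n) (al : 'rV[rat]_n) k :
  al *m iter k (mulmx M) 1%:M = iter k (fun v => v *m M) al.
Proof.
have comm : forall j, iter j.+1 (mulmx M) 1%:M = iter j (mulmx M) 1%:M *m M.
  elim=> [|j IH]; first by rewrite /= mulmx1 mul1mx.
  transitivity (M *m iter j.+1 (mulmx M) 1%:M); first by []. by rewrite {1}IH mulmxA.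
elim: k => [|k IH]; first by rewrite mulmx1.
by rewrite comm mulmxA IH.
Qed.

Theorem proposition5 :
  ~ (exists p : {poly rat},
       forall (Sigma : finType) (n : nat) (A : wautomaton Sigma n),
         is_IFA A ->
         exists (m : nat) (B : nfa Sigma m),
           (m%:R <= p.[n%:R]) /\
           (forall w : seq Sigma, nfa_accepts B w <-> wa_lang A w)).
Proof.
case=> p Hp.
case: (poly_bound p) => C0 [d HC].
case: (arith C0 d) => K HK.
case: (many_primes K) => ps [sz up pr leQ].
have pos : all (fun q => 0 < q)%N ps by apply/allP => q /(allP pr) /prime_gt0.
set F := faut K ps.
set U := uadd (uconst 1) (uscale (-1) F).
pose A : wautomaton unit (ud U) := WAut (fun _ => uM U) (ua0 U) (ue U).
have HW : forall w, wa_weight A w = 1 - (fval K ps (size w))%:R.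
  move=> w; rewrite /wa_weight wa_word_iter iter_row.
  have -> : (iter (size w) (fun v => v *m uM U) (ua0 U) *m ue U) 0 0 = uw U (size w) by [].
  by rewrite uw_add uw_const uw_scale faut_w // mulN1r.
have IFA : is_IFA A.
  by move=> w; rewrite HW; case: fval; [left; rewrite subrr | right; rewrite subr0].
case: (Hp unit (ud U) A IFA) => m [B [Hm HB]].
have m_le : (m <= C0 * (ud U) ^ d)%N.
  rewrite -(ler_nat rat); apply: le_trans Hm (HC _ _); by [].
set P := (\prod_(q <- ps) q)%N.
have P0 : (0 < P)%N.
  rewrite /P big_seq; apply: prodn_cond_gt0 => i hi; exact: (allP pos i hi).
have accP : nfa_accepts B (nseq (P * m) tt).
  apply/HB; rewrite /wa_lang HW size_nseq f_all ?subr0 // => q hq.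
  by rewrite dvdn_mulr // dvd_prod_mem.
have mle : (m <= P * m)%N by rewrite leq_pmull.
case: (@pump m B (P * m)%N accP mle) => c [c0 cm Hc].
have Prem : forall q, q \in ps -> P = (q * \prod_(r <- rem q ps) r)%N.
  by move=> q hq; rewrite /P (big_rem q).
have Pc : (P %| c)%N.
  apply: prod_dvd => // q hq; apply/negPn/negP => nq.
  have qp : prime q := allP pr q hq.
  have Pq : (P %/ q = \prod_(r <- rem q ps) r)%N by rewrite (Prem q hq) mulKn ?prime_gt0.
  have := Hc (P %/ q)%N; move/HB; rewrite /wa_lang HW size_nseq.
  rewrite (@f_one K ps _ q) //.
  - rewrite dvdn_addr; last by rewrite dvdn_mulr // dvd_prod_mem.
    rewrite Euclid_dvdM // (negbTE nq) /= Pq not_dvd_prod //.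
      by apply/allP => r /mem_rem /(allP pr).
    by rewrite mem_rem_uniqF.
  - move=> r hr rq; rewrite dvdn_add //; first by rewrite dvdn_mulr // dvd_prod_mem.
    rewrite Pq dvdn_mull // dvd_prod_mem // (mem_rem_uniq _ up) inE rq hr.
    by [].
have PM : (P <= m)%N := leq_trans (dvdn_leq c0 Pc) cm.
have P2 : (2 ^ (3 ^ K) <= P)%N by rewrite -sz; apply: prod_ge.
set Q := (2 ^ (4 * K + 4))%N in leQ.
have hQ : all (fun q => q <= Q)%N ps by [].
have Q0 : (0 < Q)%N by rewrite expn_gt0.
have Fd := @faut_dim K ps Q Q0 hQ pos.
set X := ((6 * Q) ^ (2 ^ K))%N in Fd.
have X6 : (6 <= X)%N.
  apply: leq_trans (_ : 6 * Q <= _)%N; first by rewrite leq_pmulr.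
  by rewrite -{1}(expn1 (6 * Q)) leq_exp2l ?expn_gt0 //; lia.
have UX : (ud U <= X)%N by rewrite /= add1n; move: Fd; rewrite -/F; lia.
have X2 : (X <= 2 ^ ((4 * K + 7) * 2 ^ K))%N.
  rewrite /X expnM; apply: expn_le_base.
  have E : (2 ^ (4 * K + 7) = 2 ^ 3 * 2 ^ (4 * K + 4))%N.
    by rewrite -expnD; f_equal; lia.
  rewrite E /Q; move: (2 ^ (4 * K + 4))%N => z; lia.
have Cd : (C0 < 2 ^ C0)%N by apply: ltn_expl.
have : (2 ^ (3 ^ K) < 2 ^ (C0 + (4 * K + 7) * 2 ^ K * d))%N.
  apply: leq_ltn_trans P2 _; apply: leq_ltn_trans PM _; apply: leq_ltn_trans m_le _.
  rewrite expnD mulnC; apply: leq_ltn_trans (_ : _ <= 2 ^ ((4 * K + 7) * 2 ^ K * d) * C0)%N _.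
    rewrite leq_mul2r; apply/orP; right; rewrite expnM.
    apply: expn_le_base; exact: leq_trans UX X2.
  by rewrite [X in (_ < X)%N]mulnC ltn_mul2l expn_gt0.
rewrite ltn_exp2l // ltnNge; by rewrite HK.
Qed.
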